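(* Let $(X,\Gamma)$ be a $(\mu,\nu)$-path system space. For every $\delta\ge0$ there exists $\theta\ge0$ such that for all $\delta$-constricting maps $\pi_A\colon X\to A$ and $\pi_B\colon X\to B$ we have $\operatorname{diam}_A(B)\le\operatorname{diam}_B(A)+\theta$ and $\operatorname{diam}_B(A)\le\operatorname{diam}_A(B)+\theta$.
   Context: A path is a rectifiable continuous map $\alpha\colon[a,b]\to X$ parametrised by arc length; it is a $(\kappa,\lambda)$-quasi-geodesic if $d(\alpha(t),\alpha(t'))\le|t-t'|\le\kappa d(\alpha(t),\alpha(t'))+\lambda$. A $(\mu,\nu)$-path system space $(X,\Gamma)$ is a geodesic metric space $X$ with a collection $\Gamma$ of paths closed under subpaths, such that any two points are joined by an element of $\Gamma$ and every element is a $(\mu,\nu)$-quasi-geodesic. A map $\pi_A\colon X\to A$ onto a subset $A$ is $\delta$-constricting if (CS1) $d(x,\pi_A(x))\le\delta$ for $x\in A$, and (CS2) for all $x,y\in X$ and $\gamma\in\Gamma$ joining $x$ to $y$, if $d(\pi_A(x),\pi_A(y))>\delta$ then $\gamma$ meets $B_X(\pi_A(x),\delta)$ and $B_X(\pi_A(y),\delta)$. $\operatorname{diam}_A(B)=\operatorname{diam}(\pi_A(B))$. *)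

(* Defs.v *)
From HB Require Import structures.
From mathcomp Require Import all_boot all_order all_algebra.
From mathcomp Require Import all_classical all_reals ereal.
Set Implicit Arguments. Unset Strict Implicit. Unset Printing Implicit Defensive.
Import Order.TTheory GRing.Theory Num.Theory.
Local Open Scope classical_set_scope.
Local Open Scope ring_scope.

Section Defs.
Variables (R : realType) (X : Type) (d : X -> X -> R).

Definition is_metric : Prop :=
  [/\ forall x, d x x = 0,
      forall x y, d x y = 0 -> x = y,
      forall x y, d x y = d y x &
      forall x y z, d x z <= d x y + d y z].

Definition is_geodesic_space : Prop :=
  forall x y, exists f : R -> X,
    [/\ f 0 = x, f (d x y) = y &
        forall s t, 0 <= s <= d x y -> 0 <= t <= d x y ->
          d (f s) (f t) = `|s - t|].

(* a path: a map defined on the interval [pa, pb] (values outside are irrelevant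
   to every property below, except membership in a path system) *)
Record xpath := XPath { pa : R; pb : R; pf : R -> X }.

Definition curve_length (f : R -> X) (s t : R) : \bar R :=
  ereal_sup [set z : \bar R | exists (n : nat) (p : nat -> R),
     [/\ p 0%N = s, p n = t, (forall i, (i < n)%N -> p i <= p i.+1) &
          z = (\sum_(i < n) d (f (p i)) (f (p i.+1)))%:E]].

Definition is_path (g : xpath) : Prop :=
  [/\ pa g <= pb g,
      (forall t, pa g <= t <= pb g -> forall e : R, 0 < e ->
         exists r : R, 0 < r /\ forall s, pa g <= s <= pb g -> `|s - t| < r ->
           d (pf g s) (pf g t) < e),
      (curve_length (pf g) (pa g) (pb g) < +oo)%E &
      forall s t, pa g <= s -> s <= t -> t <= pb g ->
        curve_length (pf g) s t = (t - s)%:E].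

Definition quasi_geodesic (kappa lambda : R) (g : xpath) : Prop :=
  is_path g /\
  forall t t', pa g <= t <= pb g -> pa g <= t' <= pb g ->
    d (pf g t) (pf g t') <= `|t - t'| /\
    `|t - t'| <= kappa * d (pf g t) (pf g t') + lambda.

Definition joins (g : xpath) (x y : X) : Prop := pf g (pa g) = x /\ pf g (pb g) = y.

Definition path_system_space (mu nu : R) (Gamma : set xpath) : Prop :=
  [/\ is_metric, is_geodesic_space,
      (forall g, Gamma g -> forall a' b', pa g <= a' -> a' <= b' -> b' <= pb g ->
         Gamma (XPath a' b' (pf g))),
      (forall x y, exists2 g, Gamma g & joins g x y) &
      (forall g, Gamma g -> quasi_geodesic mu nu g)].

Definition meets_ball (g : xpath) (p : X) (r : R) : Prop :=
  exists t, pa g <= t <= pb g /\ d p (pf g t) <= r.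

Definition constricting (Gamma : set xpath) (delta : R) (A : set X) (pi : X -> X) : Prop :=
  [/\ forall x, A (pi x),
      (forall x, A x -> d x (pi x) <= delta) &
      forall x y g, Gamma g -> joins g x y -> delta < d (pi x) (pi y) ->
        meets_ball g (pi x) delta /\ meets_ball g (pi y) delta].

Definition diam (S : set X) : \bar R :=
  ereal_sup [set (d x y)%:E | x in S & y in S].

Definition proj_diam (piA : X -> X) (B : set X) : \bar R := diam (piA @` B).

End Defs.

(* Main.v *)
Require Import Defs.
From HB Require Import structures.
From mathcomp Require Import all_boot all_order all_algebra.
From mathcomp Require Import all_classical all_reals ereal.
From mathcomp Require Import lra.
Import Order.TTheory GRing.Theory Num.Theory.
Local Open Scope classical_set_scope.
Local Open Scope ring_scope.

Lemma dge0 (R : realType) (X : Type) (d : X -> X -> R) :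
  is_metric d -> forall x y, 0 <= d x y.
Proof.
case=> h0 _ hs ht x y.
have := ht x y x; rewrite h0 hs; lra.
Qed.
Arguments dge0 {R X d}.

Lemma qgo (R : realType) (X : Type) (d : X -> X -> R) (mu nu : R)
    (Gamma : set (xpath R X)) :
  is_metric d -> (forall g, Gamma g -> quasi_geodesic d mu nu g) ->
  forall g, Gamma g -> forall s t, pa g <= s -> s <= t -> t <= pb g ->
  d (pf g s) (pf g t) <= t - s /\ t - s <= `|mu| * d (pf g s) (pf g t) + `|nu|.
Proof.
move=> Hm HG g Gg s t h1 h2 h3.
have [_ /(_ s t)] := HG g Gg.
have hs : pa g <= s <= pb g by apply/andP; split; lra.
have ht : pa g <= t <= pb g by apply/andP; split; lra.
move=> /(_ hs ht) [H1 H2].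
have e : `|s - t| = t - s by rewrite distrC ger0_norm // subr_ge0.
rewrite e in H1 H2; split => //.
have hd := dge0 Hm (pf g s) (pf g t).
have : mu * d (pf g s) (pf g t) <= `|mu| * d (pf g s) (pf g t).
  by rewrite ler_wpM2r // ler_norm.
have := ler_norm nu. lra.
Qed.
Arguments qgo {R X d mu nu Gamma}.

Lemma near_B (R : realType) (X : Type) (d : X -> X -> R) (mu nu : R)
    (Gamma : set (xpath R X)) delta (B : set X) piB :
  path_system_space d mu nu Gamma -> 0 <= delta ->
  constricting d Gamma delta B piB ->
  forall g, Gamma g -> forall b1 b2, joins g b1 b2 -> B b1 -> B b2 ->
  4 * delta < d b1 b2 ->
  forall t, pa g <= t -> t <= pb g ->
  exists y, B y /\ d (pf g t) y <= delta + 3 * `|mu| * delta + `|nu|.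
Proof.
move=> [Hm _ Hsub _ HG] hdel [HBin HBd HBc] g Gg b1 b2 [j1 j2] B1 B2 hfar t ht1 ht2.
have Hm' := Hm; case: Hm' => h0 _ hsym htri.
have hM := normr_ge0 mu; have hN := normr_ge0 nu.
set q := pf g t.
have G1 : Gamma (XPath (pa g) t (pf g)) by exact: (Hsub _ Gg (pa g) t (lexx _) ht1 ht2).
have G2 : Gamma (XPath t (pb g) (pf g)) by exact: (Hsub _ Gg t (pb g) ht1 ht2 (lexx _)).
have J1 : joins (XPath (pa g) t (pf g)) b1 q by split.
have J2 : joins (XPath t (pb g) (pf g)) q b2 by split.
have db1 := HBd _ B1; have db2 := HBd _ B2.
have Mdel : forall z, z <= 2 * delta -> `|mu| * z <= `|mu| * (2 * delta).
  by move=> z hz; apply: ler_wpM2l.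
have Mdel3 : forall z, z <= 3 * delta -> `|mu| * z <= `|mu| * (3 * delta).
  by move=> z hz; apply: ler_wpM2l.
case: (lerP (d (piB q) (piB b1)) delta) => c1;
case: (lerP (d (piB q) (piB b2)) delta) => c2.
- exfalso.
  have := htri b1 (piB b1) b2; have := htri (piB b1) (piB q) b2;
  have := htri (piB q) (piB b2) b2; have := hsym (piB q) (piB b1); have := hsym (piB b2) b2.
  lra.
-
  have [[s' [/andP [hs1 hs2] hs]] _] := HBc _ _ _ G2 J2 c2.
  simpl in hs1, hs2, hs.
  exists b1; split => //.
  have [_ L] := qgo Hm HG _ Gg _ _ (lexx (pa g)) (le_trans ht1 hs1) hs2.
  have [L2 _] := qgo Hm HG _ Gg _ _ (lexx (pa g)) ht1 ht2.
  rewrite j1 in L L2.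
  have D3 : d b1 (pf g s') <= 3 * delta.
    have := htri b1 (piB b1) (pf g s'); have := htri (piB b1) (piB q) (pf g s').
    have := hsym (piB b1) (piB q); have := hsym b1 (piB b1). lra.
  have := Mdel3 _ D3.
  have := hsym q b1. fold q in L2. lra.
-
  have [_ [s [/andP [hs1 hs2] hs]]] := HBc _ _ _ G1 J1 ltac:(by rewrite hsym).
  simpl in hs1, hs2, hs.
  exists b2; split => //.
  have [_ L] := qgo Hm HG _ Gg _ _ hs1 (le_trans hs2 ht2) (lexx (pb g)).
  have [L2 _] := qgo Hm HG _ Gg _ _ ht1 ht2 (lexx (pb g)).
  rewrite j2 in L L2.
  have D3 : d (pf g s) b2 <= 3 * delta.
    have := htri (pf g s) (piB q) b2; have := htri (piB q) (piB b2) b2.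
    have := hsym (piB b2) b2; have := hsym (pf g s) (piB q). lra.
  have := Mdel3 _ D3.
  fold q in L2. lra.
- have [_ [s [/andP [hs1 hs2] hs]]] := HBc _ _ _ G1 J1 ltac:(by rewrite hsym).
  have [[s' [/andP [hs1' hs2'] hs']] _] := HBc _ _ _ G2 J2 c2.
  simpl in hs1, hs2, hs, hs1', hs2', hs'.
  exists (piB q); split => //.
  have [_ L] := qgo Hm HG _ Gg _ _ hs1 (le_trans hs2 hs1') hs2'.
  have [L2 _] := qgo Hm HG _ Gg _ _ hs1 hs2 ht2.
  have D2 : d (pf g s) (pf g s') <= 2 * delta.
    have := htri (pf g s) (piB q) (pf g s'). have := hsym (pf g s) (piB q). lra.
  have := Mdel _ D2.
  have := htri q (pf g s) (piB q). have := hsym q (pf g s); have := hsym (pf g s) (piB q).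
  fold q in L2. have := mulr_ge0 hM hdel. lra.
Qed.
Arguments near_B {R X d mu nu Gamma delta B piB}.

Lemma near_proj (R : realType) (X : Type) (d : X -> X -> R) (mu nu : R)
    (Gamma : set (xpath R X)) delta (B : set X) piB :
  path_system_space d mu nu Gamma -> 0 <= delta ->
  constricting d Gamma delta B piB ->
  forall x y r, B y -> d x y <= r ->
  d x (piB x) <= r + 2 * delta + `|mu| * r + `|nu|.
Proof.
move=> [Hm _ Hsub Hj HG] hdel [HBin HBd HBc] x y r By hr.
have Hm' := Hm; case: Hm' => h0 _ hsym htri.
have hM := normr_ge0 mu; have hN := normr_ge0 nu.
have hr0 : 0 <= r by have := dge0 Hm x y; lra.
have Mr : 0 <= `|mu| * r by apply: mulr_ge0.
have dy := HBd _ By.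
case: (lerP (d (piB x) (piB y)) delta) => c.
- have := htri x y (piB x); have := htri y (piB y) (piB x); have := hsym (piB y) (piB x).
  lra.
- have [g Gg [j1 j2]] := Hj x y.
  have [[s [/andP [hs1 hs2] hs]] _] := HBc _ _ _ Gg (conj j1 j2) c.
  have [L1 _] := qgo Hm HG _ Gg _ _ (lexx _) hs1 hs2.
  have [_ L2] := qgo Hm HG _ Gg _ _ (lexx _) (le_trans hs1 hs2) (lexx _).
  rewrite j1 j2 in L2; rewrite j1 in L1.
  have : `|mu| * d x y <= `|mu| * r by apply: ler_wpM2l.
  have := htri x (pf g s) (piB x); have := hsym (pf g s) (piB x).
  lra.
Qed.
Arguments near_proj {R X d mu nu Gamma delta B piB}.

Lemma short (R : realType) (X : Type) (d : X -> X -> R) (mu nu : R)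
    (Gamma : set (xpath R X)) delta :
  path_system_space d mu nu Gamma -> 0 <= delta ->
  forall g, Gamma g -> forall b1 b2, joins g b1 b2 -> d b1 b2 <= 4 * delta ->
  forall t1 t2, pa g <= t1 <= pb g -> pa g <= t2 <= pb g ->
  forall a1 a2, d a1 (pf g t1) <= delta -> d a2 (pf g t2) <= delta ->
  d a1 a2 <= 2 * delta + `|mu| * (4 * delta) + `|nu|.
Proof.
move=> [Hm _ Hsub Hj HG] hdel g Gg b1 b2 [j1 j2] hb t1 t2 /andP[h1 h2] /andP[h3 h4] a1 a2 e1 e2.
have Hm' := Hm; case: Hm' => h0 _ hsym htri.
have [_ L] := qgo Hm HG _ Gg _ _ (lexx _) (le_trans h1 h2) (lexx _).
rewrite j1 j2 in L.
have : `|mu| * d b1 b2 <= `|mu| * (4 * delta) by apply: ler_wpM2l.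
have D : d (pf g t1) (pf g t2) <= pb g - pa g.
  case: (lerP t1 t2) => c.
  - have [L1 _] := qgo Hm HG _ Gg _ _ h1 c h4. lra.
  - have [L1 _] := qgo Hm HG _ Gg _ _ h3 (ltW c) h2. have := hsym (pf g t1) (pf g t2). lra.
have := htri a1 (pf g t1) a2; have := htri (pf g t1) (pf g t2) a2;
have := hsym a2 (pf g t2).
lra.
Qed.
Arguments short {R X d mu nu Gamma delta}.

Lemma one_dir (R : realType) (X : Type) (d : X -> X -> R) (mu nu : R)
    (Gamma : set (xpath R X)) delta (A B : set X) piA piB :
  path_system_space d mu nu Gamma -> 0 <= delta ->
  constricting d Gamma delta A piA -> constricting d Gamma delta B piB ->
  (proj_diam d piA B <= proj_diam d piB A +
    (2 * delta + `|mu| * (4 * delta) + `|nu| +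
        2 * ((delta + (delta + 3 * `|mu| * delta + `|nu|)) + 2 * delta +
             `|mu| * (delta + (delta + 3 * `|mu| * delta + `|nu|)) + `|nu|))%:E)%E.
Proof.
move=> HP hdel HA HB.
set T := 2 * delta + `|mu| * (4 * delta) + `|nu|.
set C' := delta + (delta + 3 * `|mu| * delta + `|nu|).
set E := C' + 2 * delta + `|mu| * C' + `|nu|.
have HP' := HP; case: HP' => Hm _ Hsub Hj HG.
have Hm' := Hm; case: Hm' => h0 _ hsym htri.
have hM := normr_ge0 mu; have hN := normr_ge0 nu.
have Md : 0 <= `|mu| * delta by apply: mulr_ge0.
have HA' := HA; case: HA' => HAin HAd HAc.
have HB' := HB; case: HB' => HBin HBd HBc.
have E0 : 0 <= E.
  have : 0 <= `|mu| * C' by apply: mulr_ge0; rewrite /C'; lra.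
  rewrite /E /C'. lra.
have T0 : 0 <= T by rewrite /T; lra.
apply: ge_ereal_sup => z [x1 [b1 B1 <-]] [x2 [b2 B2 <-]] <-.
set S := proj_diam d piB A.
have S0 : (0 <= S)%E.
  suff : ((d (piB (piA b1)) (piB (piA b1)))%:E <= S)%E by rewrite h0.
  apply: ereal_sup_ubound.
  exists (piB (piA b1)); first by exists (piA b1).
  by exists (piB (piA b1)); first by exists (piA b1).
case: (lerP (d (piA b1) (piA b2)) T) => cT.
- move: S0; case: S => [r| |] //=.
  + rewrite !lee_fin => r0. lra.
  + move=> _; rewrite addye //; exact: leey.
have far : 4 * delta < d b1 b2.
  rewrite ltNge; apply/negP => hb.
  have [g Gg J] := Hj b1 b2.
  have cd : delta < d (piA b1) (piA b2).
    have : delta <= T by rewrite /T; lra.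
    lra.
  have [[t1 [ht1 e1]] [t2 [ht2 e2]]] := HAc _ _ _ Gg J cd.
  have := short HP hdel _ Gg _ _ J hb _ _ ht1 ht2 _ _ e1 e2. rewrite -/T. lra.
have [g Gg J] := Hj b1 b2.
have cd : delta < d (piA b1) (piA b2).
  have : delta <= T by rewrite /T; lra.
  lra.
have [[t1 [/andP[ht1 ht1'] e1]] [t2 [/andP [ht2 ht2'] e2]]] := HAc _ _ _ Gg J cd.
have [y1 [By1 dy1]] := near_B HP hdel HB _ Gg _ _ J B1 B2 far _ ht1 ht1'.
have [y2 [By2 dy2]] := near_B HP hdel HB _ Gg _ _ J B1 B2 far _ ht2 ht2'.
have r1 : d (piA b1) y1 <= C'.
  have := htri (piA b1) (pf g t1) y1. rewrite /C'. lra.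
have r2 : d (piA b2) y2 <= C'.
  have := htri (piA b2) (pf g t2) y2. rewrite /C'. lra.
have p1 := near_proj HP hdel HB _ _ _ By1 r1.
have p2 := near_proj HP hdel HB _ _ _ By2 r2.
have U : ((d (piB (piA b1)) (piB (piA b2)))%:E <= S)%E.
  apply: ereal_sup_ubound.
  exists (piB (piA b1)); first by exists (piA b1).
  by exists (piB (piA b2)); first by exists (piA b2).
have tri : d (piA b1) (piA b2) <= d (piB (piA b1)) (piB (piA b2)) + 2 * E.
  have := htri (piA b1) (piB (piA b1)) (piA b2).
  have := htri (piB (piA b1)) (piB (piA b2)) (piA b2).
  have := hsym (piB (piA b2)) (piA b2).
  rewrite /E. lra.
move: U S0; case: S => [r| |] //=.
- rewrite !lee_fin => U _. lra.
- move=> _ _; rewrite addye //; exact: leey.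
Qed.
Arguments one_dir {R X d mu nu Gamma delta A B piA piB}.

Theorem mainTheorem11 (R : realType) (X : Type) (d : X -> X -> R) (mu nu : R)
    (Gamma : set (xpath R X)) :
  path_system_space d mu nu Gamma ->
  forall delta : R, 0 <= delta ->
  exists theta : R, 0 <= theta /\
    forall (A B : set X) (piA piB : X -> X),
      constricting d Gamma delta A piA -> constricting d Gamma delta B piB ->
      (proj_diam d piA B <= proj_diam d piB A + theta%:E)%E /\
      (proj_diam d piB A <= proj_diam d piA B + theta%:E)%E.
Proof.
move=> HP delta hdel.
have hM := normr_ge0 mu; have hN := normr_ge0 nu.
have Md : 0 <= `|mu| * delta by apply: mulr_ge0.
have MC : 0 <= `|mu| * (delta + (delta + 3 * `|mu| * delta + `|nu|)).
  by apply: mulr_ge0; lra.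
eexists; split; last first.
  move=> A B piA piB HA HB; split.
  - exact: (one_dir HP hdel HA HB).
  - exact: (one_dir HP hdel HB HA).
lra.
Qed.
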